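(* Let $\langle U,B\rangle$ be a 3-frame (i.e. $U\neq\emptyset$ and $B\subseteq U^3$), and define for $X,Y\subseteq U$ $\langle B\rangle(X,Y)=\{u\in U\mid \exists x\in X\,\exists y\in Y\, B(x,u,y)\}$ and $[\![B]\!](X,Y)=\{u\in U\mid \forall x\in X\,\forall y\in Y\, B(x,u,y)\}$. Then: (i) $B(a,a,a)$ for all $a\in U$ iff $X\subseteq\langle B\rangle(X,X)$ for all $X\subseteq U$; (ii) ($B(a,b,c)\Rightarrow B(c,b,a)$ for all $a,b,c$) iff $\langle B\rangle(X,Y)\subseteq\langle B\rangle(Y,X)$ for all $X,Y\subseteq U$; (iii) ($B(a,b,c)\Rightarrow B(c,b,a)$ for all $a,b,c$) iff $[\![B]\!](X,Y)\subseteq[\![B]\!](Y,X)$ for all $X,Y\subseteq U$; (iv) ($B(a,b,c)\Rightarrow B(a,a,b)$ for all $a,b,c$) iff $Y\cap\langle B\rangle(X,Z)\subseteq\langle B\rangle(X\cap\langle B\rangle(X,Y),Z)$ for all $X,Y,Z\subseteq U$; (v) ($B(a,b,c)\wedge B(a,c,b)\Rightarrow b=c$ for all $a,b,c$) iff $\langle B\rangle\big(X,[\![B]\!](X,U\setminus Y)\cap Y\big)\subseteq Y$ for all $X,Y\subseteq U$; (vi) ($B(a,b,a)\Rightarrow a=b$ for all $a,b$) iff $[\![B]\!](X,X)\subseteq X$ for all non-empty $X\subseteq U$; (vii) ($B(a,a,b)$ for all $a,b$) iff $X\subseteq\langle B\rangle(X,Y)$ for all $X\subseteq U$ and all non-empty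 $Y\subseteq U$. *)

(* Defs.v *)
From mathcomp Require Import all_boot.
From mathcomp Require Export classical_sets.
Set Implicit Arguments. Unset Strict Implicit. Unset Printing Implicit Defensive.
Local Open Scope classical_set_scope.

Definition diamB {U : Type} (B : U -> U -> U -> Prop) (X Y : set U) : set U :=
  [set u | exists x y, [/\ X x, Y y & B x u y]].

Definition boxB {U : Type} (B : U -> U -> U -> Prop) (X Y : set U) : set U :=
  [set u | forall x y, X x -> Y y -> B x u y].

(* Main.v *)
Require Import Defs.
From mathcomp Require Import all_boot classical_sets.
From Stdlib Require Import Classical.
Local Open Scope classical_set_scope.

Theorem theorem20 (U : Type) (B : U -> U -> U -> Prop) (hU : [set: U] !=set0) :
  ((forall a, B a a a) <-> (forall X : set U, X `<=` diamB B X X)) /\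
  ((forall a b c, B a b c -> B c b a) <->
     (forall X Y : set U, diamB B X Y `<=` diamB B Y X)) /\
  ((forall a b c, B a b c -> B c b a) <->
     (forall X Y : set U, boxB B X Y `<=` boxB B Y X)) /\
  ((forall a b c, B a b c -> B a a b) <->
     (forall X Y Z : set U,
        Y `&` diamB B X Z `<=` diamB B (X `&` diamB B X Y) Z)) /\
  ((forall a b c, B a b c -> B a c b -> b = c) <->
     (forall X Y : set U, diamB B X (boxB B X (~` Y) `&` Y) `<=` Y)) /\
  ((forall a b, B a b a -> a = b) <->
     (forall X : set U, X !=set0 -> boxB B X X `<=` X)) /\
  ((forall a b, B a a b) <->
     (forall X Y : set U, Y !=set0 -> X `<=` diamB B X Y)).
Proof.
unfold diamB, boxB.
split; [|split; [|split; [|split; [|split; [|split]]]]]; split.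
- intros H X u Xu. exists u, u. split; auto.
- intros H a. destruct (H (fun x => x = a) a erefl) as [x [y [Hx Hy Hb]]].
  simpl in *; subst; exact Hb.
- intros H X Y u [x [y [Hx Hy Hb]]]. exists y, x. split; auto.
- intros H a b c Hb. destruct (H (fun x => x = a) (fun x => x = c) b) as [x [y [Hx Hy Hb']]].
  + exists a, c. split; auto.
  + simpl in *; subst; exact Hb'.
- intros H X Y u Hu x y Hx Hy. apply H, Hu; auto.
- intros H a b c Hb. apply (H (fun x => x = a) (fun x => x = c) b); auto.
  simpl; intros x y -> ->; exact Hb.
- intros H X Y Z u [Yu [x [z [Hx Hz Hb]]]]. exists x, z. split; auto.
  split; auto. exists x, u. split; eauto.
- intros H a b c Hb.
  destruct (H (fun x => x = a) (fun x => x = b) (fun x => x = c) b) as [x [z [[Hx Hx'] Hz Hb']]].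
  + split; [reflexivity|]. exists a, c. split; auto.
  + simpl in *. subst. destruct Hx' as [x' [y' [-> -> Hb'']]]. exact Hb''.
- intros H X Y u [x [y [Hx [Hy1 Hy2] Hb]]].
  destruct (classic (Y u)) as [Yu|nYu]; auto.
  assert (u = y) as -> by (apply (H x); auto; apply Hy1; auto). exact Hy2.
- intros H a b c H1 H2. apply NNPP; intro Hne.
  assert (Hb : (fun x => x <> b) b).
  { apply (H (fun x => x = a) (fun x => x <> b) b). exists a, c. split; auto.
    split.
    + simpl; intros x y -> Hy. apply NNPP in Hy; subst; exact H2.
    + simpl; intro E; apply Hne; auto. }
  apply Hb; reflexivity.
- intros H X [x Hx] u Hu. specialize (Hu x x Hx Hx). rewrite <- (H x u Hu). exact Hx.
- intros H a b Hb. symmetry. apply (H (fun x => x = a)); [exists a; reflexivity|].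
  simpl; intros x y -> ->; exact Hb.
- intros H X Y [y Hy] x Hx. exists x, y. split; auto.
- intros H a b. destruct (H (fun x => x = a) (fun x => x = b) (ex_intro _ b erefl) a erefl)
    as [x [y [Hx Hy Hb]]]. simpl in *; subst; exact Hb.
Qed.
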